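(* Let $G=H\times K$ where $H$ and $K$ are non-abelian finite $p$-groups, and let $\alpha\in Z^2(G,\mathbb{C}^\times)$. (1) If $\alpha=(1,1,f)$, then no irreducible $\alpha$-representation of $G$ is faithful. (2) Suppose $Z(G)\subseteq G'$ and $\alpha=(\beta,\gamma,f)$. Then an irreducible $\alpha$-representation of $G$ is faithful if and only if $1$ is the only $\beta$-regular element of $Z(H)$ and $1$ is the only $\gamma$-regular element of $Z(K)$. Furthermore, $G$ admits a faithful irreducible $\alpha$-representation if and only if $H$ admits a faithful irreducible $\beta$-representation and $K$ admits a faithful irreducible $\gamma$-representation.
   Context: All groups finite, representations complex. For a cocycle $\alpha$, an $\alpha$-representation is a map $\rho:G\to\mathrm{GL}(V)$ with $\rho(1)=1$ and $\rho(g)\rho(h)=\alpha(g,h)\rho(gh)$; it is faithful if the only $g$ with $\rho(g)$ scalar is $g=1$. An element $x\in G$ is $\alpha$-regular if $\alpha(g,x)=\alpha(x,g)$ for all $g\in C_G(x)$. For $G=H\times K$, cocycles $\beta$ of $H$, $\gamma$ of $K$ and a homomorphism $f:H/H'\otimes_{\mathbb{Z}}K/K'\to\mathbb{C}^\times$, $\alpha=(\beta,\gamma,f)$ denotes the cocycle $\alpha(h_1k_1,h_2k_2)=\beta(h_1,h_2)\gamma(k_1,k_2)f(h_1H'\otimes k_2K')$. *)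

(* Defs.v *)
From HB Require Import structures.
From mathcomp Require Import all_boot all_order all_algebra all_fingroup all_solvable all_field all_character.
Set Implicit Arguments. Unset Strict Implicit. Unset Printing Implicit Defensive.
Import GRing.Theory Num.Theory.
Local Open Scope ring_scope.

Definition is_cocycle (gT : finGroupType) (G : {set gT}) (a : gT -> gT -> algC) :=
  [/\ forall x y, x \in G -> y \in G -> a x y != 0,
      forall x, x \in G -> a 1%g x = 1 /\ a x 1%g = 1
    & forall x y z, x \in G -> y \in G -> z \in G ->
        a x y * a (x * y)%g z = a y z * a x (y * z)%g].

Definition is_alpha_rep (gT : finGroupType) (G : {set gT}) (a : gT -> gT -> algC)
  (n : nat) (rho : gT -> 'M[algC]_n) :=
  [/\ rho 1%g = 1%:M,
      forall g, g \in G -> rho g \in unitmx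
    & forall g h, g \in G -> h \in G -> (rho g *m rho h = a g h *: rho (g * h)%g)%R].

Definition alpha_irreducible (gT : finGroupType) (G : {set gT}) (n : nat)
  (rho : gT -> 'M[algC]_n) :=
  (0 < n)%N /\
  forall U : 'M[algC]_n, (forall g, g \in G -> (U *m rho g <= U)%MS) ->
    U = 0 \/ row_full U.

Definition alpha_faithful (gT : finGroupType) (G : {set gT}) (n : nat)
  (rho : gT -> 'M[algC]_n) :=
  forall g, g \in G -> is_scalar_mx (rho g) -> g = 1%g.

Definition has_faithful_irr (gT : finGroupType) (G : {set gT}) (a : gT -> gT -> algC) :=
  exists n (rho : gT -> 'M[algC]_n),
    [/\ is_alpha_rep G a rho, alpha_irreducible G rho & alpha_faithful G rho].

Definition alpha_regular (gT : finGroupType) (G : {set gT}) (a : gT -> gT -> algC) (x : gT) :=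
  forall g, g \in ('C_G[x])%g -> a g x = a x g.

(* A homomorphism H/H' (x) K/K' -> C^x, i.e. (universal property of the tensor
   product) a bimultiplicative map H x K -> C^x. *)
Definition is_bihom (hT kT : finGroupType) (f : hT -> kT -> algC) :=
  [/\ forall h k, f h k != 0,
      forall h1 h2 k, f (h1 * h2)%g k = f h1 k * f h2 k
    & forall h k1 k2, f h (k1 * k2)%g = f h k1 * f h k2].

Definition prod_cocycle (hT kT : finGroupType) (b : hT -> hT -> algC)
  (c : kT -> kT -> algC) (f : hT -> kT -> algC) : (hT * kT) -> (hT * kT) -> algC :=
  fun x y => b x.1 y.1 * c x.2 y.2 * f x.1 y.2.

Definition trivial_cocycle (gT : finGroupType) : gT -> gT -> algC := fun _ _ => 1.

(* Main.v *)
Require Import Defs.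
From HB Require Import structures.
From mathcomp Require Import all_boot all_order all_algebra all_fingroup all_solvable all_field all_character.
Import GRing.Theory Num.Theory.
From Stdlib Require Import Classical_Prop.
From mathcomp Require Import ring.
Local Open Scope ring_scope.
Set Implicit Arguments. Unset Strict Implicit. Unset Printing Implicit Defensive.

Lemma schur (gT : finGroupType) (G : {set gT}) n (rho : gT -> 'M[algC]_n)
  (A : 'M[algC]_n) :
  alpha_irreducible G rho ->
  (forall g, g \in G -> (A *m rho g = rho g *m A)%R) -> is_scalar_mx A.
Proof.
move=> [n0 irr] cA.
have [lam] : exists lam, eigenvalue A lam.
  have : size (char_poly A) != 1%N by rewrite size_char_poly; case: n n0 {irr cA rho A}.
  by move/closed_rootP => [x rx]; exists x; rewrite eigenvalue_root_char.
rewrite /eigenvalue /eigenspace => nz.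
have inv : forall g, g \in G -> (kermx (A - lam%:M)%R *m rho g <= kermx (A - lam%:M)%R)%MS.
  move=> g Gg; rewrite sub_kermx -mulmxA mulmxBr -cA // scalar_mxC.
  by rewrite -mulmxBl mulmxA mulmx_ker mul0mx.
case: (irr _ inv) => [U0|fU]; first by rewrite U0 eqxx in nz.
have : (1%:M <= kermx (A - lam%:M))%MS by apply: submx_full.
rewrite sub_kermx mul1mx subr_eq0 => /eqP ->.
exact: scalar_mx_is_scalar.
Qed.

Lemma unit_neq0 n (M : 'M[algC]_n) : (0 < n)%N -> M \in unitmx -> M != 0.
Proof.
case: n M => // n M _ uM; apply/eqP => M0.
have := mulmxV uM; rewrite M0 mul0mx => /esym/eqP.
by rewrite -[1%:M]/(1 : 'M_n.+1) oner_eq0.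
Qed.

Lemma central_comm (gT : finGroupType) (z g : gT) : z \in ('Z([set: gT]))%g -> (z * g = g * z)%g.
Proof. by case/centerP => _ /(_ g (in_setT g)). Qed.

Lemma reg_scalar (gT : finGroupType) (a : gT -> gT -> algC) n (rho : gT -> 'M[algC]_n) z :
  is_alpha_rep [set: gT] a rho -> alpha_irreducible [set: gT] rho ->
  z \in ('Z([set: gT]))%g -> (forall g, a g z = a z g) -> is_scalar_mx (rho z).
Proof.
move=> [_ _ rM] irr Zz reg; apply: (schur irr) => g _.
by rewrite !rM ?inE // reg central_comm.
Qed.

Lemma scalar_reg (gT : finGroupType) (a : gT -> gT -> algC) n (rho : gT -> 'M[algC]_n) z g :
  is_alpha_rep [set: gT] a rho -> (0 < n)%N ->
  z \in ('Z([set: gT]))%g -> is_scalar_mx (rho z) -> a g z = a z g.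
Proof.
move=> [_ uR rM] n0 Zz /is_scalar_mxP [l rz].
have : rho g *m rho z = rho z *m rho g by rewrite rz scalar_mxC.
rewrite !rM ?inE // (@central_comm _ z g Zz) => /eqP; rewrite -subr_eq0 -scalerBl scalemx_eq0.
by rewrite (negPf (unit_neq0 n0 (uR _ (in_setT _)))) orbF subr_eq0 => /eqP.
Qed.

Lemma scal_scalar n (M : 'M[algC]_n) c d : c != 0 -> c *: M = d%:M -> is_scalar_mx M.
Proof.
move=> c0 e; apply/is_scalar_mxP; exists (c^-1 * d).
by rewrite -scale_scalar_mx -e scalerA mulVf // scale1r.
Qed.

Lemma pgroup_faithful (gT : finGroupType) (p : nat) (a : gT -> gT -> algC) n (rho : gT -> 'M[algC]_n) :
  (p.-group [set: gT])%g -> (forall x y, a x y != 0) -> is_alpha_rep [set: gT] a rho -> (0 < n)%N ->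
  (forall z, z \in ('Z([set: gT]))%g -> (forall g, a g z = a z g) -> z = 1%g) ->
  alpha_faithful [set: gT] rho.
Proof.
move=> pG a0 rep n0 hyp g _ sg; have [r1 uR rM] := rep; case: (eqVneq g 1%g) => // ng1.
pose N := [set x | is_scalar_mx (rho x)].
have gN : group_set N.
  apply/group_setP; split; first by rewrite inE r1 scalar_mx_is_scalar.
  move=> x y; rewrite !inE => /is_scalar_mxP[l rx] /is_scalar_mxP[m ry].
  apply: (@scal_scalar _ _ (a x y) (l * m)) => //.
  by rewrite -rM ?inE // rx ry scalar_mxM.
pose NG := Group gN.
have nN : (NG <| [set: gT])%g.
  rewrite /normal subsetT /=; apply/normsP => x _.
  apply/eqP; rewrite eqEcard cardJg leqnn andbT; apply/subsetP => y.
  rewrite mem_conjg !inE; set w := (y ^ x^-1)%g => /is_scalar_mxP [l ry].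
  have -> : y = (w ^ x)%g by rewrite /w conjgKV.
  rewrite conjgE.
  apply: (@scal_scalar _ _ (a x^-1%g w * a (x^-1 * w)%g x) (l * a x^-1%g x)).
    by rewrite mulf_neq0.
  clearbody w; rewrite mulgA -scalerA -rM ?inE // scalemxAl -rM ?inE // ry scalar_mxC -mulmxA.
  by rewrite rM ?inE // mulVg r1 scalemx1 -scalar_mxM.
have ntN : (NG :!=: 1)%g.
  by apply/trivgPn; exists g; rewrite ?inE.
have nilG : nilpotent [set: gT] by exact: pgroup_nil pG.
have := meet_center_nil nilG nN ntN.
case/trivgPn => z /setIP[Nz Zz] nz.
rewrite inE in Nz.
by rewrite (hyp z Zz (fun g => scalar_reg g rep n0 Zz Nz)) eqxx in nz.
Qed.

Lemma mk_rep (gT : finGroupType) (a : gT -> gT -> algC) n (s : gT -> 'M[algC]_n) :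
  (forall x y, a x y != 0) -> s 1%g = 1%:M ->
  (forall g h, s g *m s h = a g h *: s (g * h)%g) -> is_alpha_rep [set: gT] a s.
Proof.
move=> a0 s1 sM; split=> // g _.
suff : s g *m ((a g g^-1%g)^-1 *: s g^-1%g) = 1%:M by case/mulmx1_unit.
by rewrite -scalemxAr sM mulgV s1 scalerA mulVf // scale1r.
Qed.

Lemma sub_rep (gT : finGroupType) (a : gT -> gT -> algC) m (rho : gT -> 'M[algC]_m)
  (U : 'M[algC]_m) : (forall x y, a x y != 0) -> is_alpha_rep [set: gT] a rho ->
  (forall g, g \in [set: gT] -> (U *m rho g <= U)%MS) ->
  exists sigma : gT -> 'M[algC]_(\rank U), is_alpha_rep [set: gT] a sigma.
Proof.
move=> a0 [r1 _ rM] inv.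
set B := row_base U.
have invB g : (B *m rho g <= B)%MS.
  rewrite (eq_row_base U); apply: submx_trans (inv g (in_setT g)).
  by apply: submxMr; rewrite (eq_row_base U).
have BP : B *m pinvmx B = 1%:M.
  apply: (row_free_inj (row_base_free U)); rewrite mul1mx.
  exact: mulmxKpV (submx_refl B).
exists (fun g => B *m rho g *m pinvmx B); apply: mk_rep => //.
  by rewrite r1 mulmx1.
move=> g h; rewrite mulmxA (mulmxA (B *m rho g *m pinvmx B) B) (mulmxKpV (invB g)).
rewrite -(mulmxA B (rho g)) rM ?inE //.
by rewrite -scalemxAr -scalemxAl.
Qed.

Definition regrep (gT : finGroupType) (a : gT -> gT -> algC) (g : gT) : 'M[algC]_#|gT| :=
  \matrix_(i, j) (if enum_val j == (enum_val i * g)%g then a (enum_val i) g else 0).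

Lemma regrep_rep (gT : finGroupType) (a : gT -> gT -> algC) :
  (forall x y, a x y != 0) -> (forall x, a x 1%g = 1) ->
  (forall x y z, a x y * a (x * y)%g z = a y z * a x (y * z)%g) ->
  is_alpha_rep [set: gT] a (regrep a).
Proof.
move=> a0 a1 coc; apply: mk_rep => //.
  apply/matrixP => i j; rewrite !mxE mulg1 a1 (inj_eq enum_val_inj).
  by rewrite eq_sym; case: eqP.
move=> g h; apply/matrixP => i k; rewrite !mxE.
rewrite (bigD1 (enum_rank (enum_val i * g)%g)) //= big1 ?addr0; last first.
  move=> j nj; rewrite !mxE; case: eqP => [ej|]; last by rewrite mul0r.
  by rewrite -ej enum_valK eqxx in nj.
rewrite !mxE enum_rankK eqxx -mulgA; case: eqP => _; last by rewrite !mulr0.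
exact: coc.
Qed.

Lemma exists_irr (gT : finGroupType) (a : gT -> gT -> algC) :
  (forall x y, a x y != 0) -> (forall x, a x 1%g = 1) ->
  (forall x y z, a x y * a (x * y)%g z = a y z * a x (y * z)%g) ->
  exists n (rho : gT -> 'M[algC]_n),
    is_alpha_rep [set: gT] a rho /\ alpha_irreducible [set: gT] rho.
Proof.
move=> a0 a1 coc.
suff H : forall m (rho : gT -> 'M[algC]_m), (0 < m)%N -> is_alpha_rep [set: gT] a rho ->
  exists n (rho : gT -> 'M[algC]_n),
    is_alpha_rep [set: gT] a rho /\ alpha_irreducible [set: gT] rho.
  apply: (H _ (regrep a)); last exact: regrep_rep.
  by rewrite -cardsT cardG_gt0.
elim/ltn_ind => m IH rho m0 rep.
case: (Classical_Prop.classic (alpha_irreducible [set: gT] rho)) => [irr|nirr].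
  by exists m, rho.
case: (Classical_Prop.classic (exists n (rho : gT -> 'M[algC]_n),
    is_alpha_rep [set: gT] a rho /\ alpha_irreducible [set: gT] rho)) => // nex.
exfalso; apply: nirr; split => // U inv.
apply: Classical_Prop.NNPP => h; apply: nex.
have [sig rs] := sub_rep a0 rep inv.
apply: (IH (\rank U)) rs.
  rewrite ltn_neqAle rank_leq_col andbT.
  by apply/negP => fU; apply: h; right.
rewrite lt0n mxrank_eq0; apply/negP => /eqP U0; by apply: h; left.
Qed.

Lemma comm_trivial (gT : finGroupType) (phi : gT -> algC) :
  (forall x y, phi (x * y)%g = phi x * phi y) -> (forall x, phi x != 0) ->
  forall z, z \in ([~: [set: gT], [set: gT]])%g -> phi z = 1.
Proof.
move=> pM p0.
have p1 : phi 1%g = 1.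
  by apply: (mulfI (p0 1%g)); rewrite -pM mulg1 mulr1.
have pV x : phi x^-1%g = (phi x)^-1.
  by apply: (mulfI (p0 x)); rewrite -pM mulgV p1 mulfV.
have gS : group_set [set x | phi x == 1].
  apply/group_setP; split; first by rewrite inE p1.
  by move=> x y; rewrite !inE pM => /eqP -> /eqP ->; rewrite mulr1.
suff : ([~: [set: gT], [set: gT]] \subset Group gS)%g.
  by move=> /subsetP sub z /sub; rewrite inE => /eqP.
rewrite /commutator gen_subG; apply/subsetP => z /imset2P [x y _ _ ->].
rewrite inE /commg /conjg !pM !pV.
by rewrite mulrCA mulKf // mulVf.
Qed.

Section Prod.
Variables (hT kT : finGroupType).

Lemma prod_mul1 (x y : hT * kT) : (x * y)%g.1 = (x.1 * y.1)%g.
Proof. by []. Qed.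
Lemma prod_mul2 (x y : hT * kT) : (x * y)%g.2 = (x.2 * y.2)%g.
Proof. by []. Qed.

Lemma prodZ (z : hT * kT) : z \in ('Z([set: hT * kT]))%g ->
  z.1 \in ('Z([set: hT]))%g /\ z.2 \in ('Z([set: kT]))%g.
Proof.
move/centerP => [_ cz]; split; apply/centerP; split => // y _.
  by have := cz (y, 1%g) (in_setT _); case: z {cz} => x1 x2 [].
by have := cz (1%g, y) (in_setT _); case: z {cz} => x1 x2 [].
Qed.

Lemma Zprod (x : hT) (y : kT) : x \in ('Z([set: hT]))%g -> y \in ('Z([set: kT]))%g ->
  (x, y) \in ('Z([set: hT * kT]))%g.
Proof.
move=> /centerP [_ cx] /centerP [_ cy]; apply/centerP; split; first exact: in_setT. move=> -[h k] _.
rewrite /commute [LHS]surjective_pairing [RHS]surjective_pairing !prod_mul1 !prod_mul2 /=.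
by rewrite (cx h) ?inE // (cy k) ?inE.
Qed.

Lemma bihom1 (f : hT -> kT -> algC) : is_bihom f ->
  (forall h, f h 1%g = 1) /\ (forall k, f 1%g k = 1).
Proof.
case=> f0 fl fr; split => [h|k].
  by apply: (mulfI (f0 h 1%g)); rewrite -fr mulg1 mulr1.
by apply: (mulfI (f0 1%g k)); rewrite -fl mulg1 mulr1.
Qed.

Lemma bihom_comm (f : hT -> kT -> algC) : is_bihom f ->
  forall z, z \in ([~: [set: hT * kT], [set: hT * kT]])%g ->
  (forall h, f h z.2 = 1) /\ (forall k, f z.1 k = 1).
Proof.
case=> f0 fl fr z zG; split => [h|k].
  apply: (comm_trivial (phi := fun z : hT * kT => f h z.2)) => // x y.
  by rewrite prod_mul2 fr.
apply: (comm_trivial (phi := fun z : hT * kT => f z.1 k)) => // x y.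
by rewrite prod_mul1 fl.
Qed.

Lemma pgroup_prod (p : nat) : (p.-group [set: hT])%g -> (p.-group [set: kT])%g ->
  (p.-group [set: hT * kT])%g.
Proof. by rewrite /pgroup !cardsT card_prod pnatM => -> ->. Qed.

Lemma prod_cocycle_ok (b : hT -> hT -> algC) (c : kT -> kT -> algC) f :
  is_cocycle [set: hT] b -> is_cocycle [set: kT] c -> is_bihom f ->
  [/\ forall x y, prod_cocycle b c f x y != 0,
      forall x, prod_cocycle b c f x 1%g = 1 &
      forall x y z, prod_cocycle b c f x y * prod_cocycle b c f (x * y)%g z =
                    prod_cocycle b c f y z * prod_cocycle b c f x (y * z)%g].
Proof.
move=> [b0 b1 bc] [c0 c1 cc] fh; have [f1 f1'] := bihom1 fh; have [f0 fl fr] := fh.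
split.
- by move=> x y; rewrite /prod_cocycle !mulf_neq0 ?b0 ?c0 ?inE.
- move=> x; rewrite /prod_cocycle /=.
  by rewrite (proj2 (b1 _ (in_setT _))) (proj2 (c1 _ (in_setT _))) f1 !mulr1.
- move=> x y z; rewrite /prod_cocycle !prod_mul1 !prod_mul2 fl fr.
  have e1 := bc x.1 y.1 z.1 (in_setT _) (in_setT _) (in_setT _).
  have e2 := cc x.2 y.2 z.2 (in_setT _) (in_setT _) (in_setT _).
  transitivity ((b x.1 y.1 * b (x.1 * y.1)%g z.1) * (c x.2 y.2 * c (x.2 * y.2)%g z.2) *
    (f x.1 y.2 * f x.1 z.2 * f y.1 z.2)); first by ring.
  rewrite e1 e2; by ring.
Qed.
End Prod.

Lemma transl (hT kT : finGroupType) (b : hT -> hT -> algC) (c : kT -> kT -> algC) f :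
  is_cocycle [set: hT] b -> is_cocycle [set: kT] c -> is_bihom f ->
  ('Z([set: hT * kT]) \subset [~: [set: hT * kT], [set: hT * kT]])%g ->
  ((forall z, z \in ('Z([set: hT * kT]))%g ->
      (forall g, prod_cocycle b c f g z = prod_cocycle b c f z g) -> z = 1%g) <->
   (forall x, x \in ('Z([set: hT]))%g -> alpha_regular [set: hT] b x -> x = 1%g) /\
   (forall y, y \in ('Z([set: kT]))%g -> alpha_regular [set: kT] c y -> y = 1%g)).
Proof.
move=> [_ b1 _] [_ c1 _] fh sZ.
have bl x : b 1%g x = 1 := proj1 (b1 x (in_setT x)).
have br x : b x 1%g = 1 := proj2 (b1 x (in_setT x)).
have cl x : c 1%g x = 1 := proj1 (c1 x (in_setT x)).
have cr x : c x 1%g = 1 := proj2 (c1 x (in_setT x)).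
have [fr fl] := bihom1 fh.
have Zc z : z \in ('Z([set: hT * kT]))%g ->
    (forall h, f h z.2 = 1) /\ (forall k, f z.1 k = 1).
  by move=> Zz; apply: bihom_comm => //; apply: (subsetP sZ).
have Z1 := group1 ('Z([set: hT]))%G.
have Z2 := group1 ('Z([set: kT]))%G.
split.
- move=> hyp; split.
  + move=> x Zx rx.
    have Zz := Zprod Zx Z2.
    suff: ((x, 1%g) : hT * kT) = 1%g by case.
    apply: (hyp (x, 1%g) Zz) => -[h k]; rewrite /prod_cocycle /= cr cl fr (proj2 (Zc _ Zz)).
    rewrite (rx h) //; apply/setIP; split; first exact: in_setT.
    by apply/cent1P; rewrite /commute (central_comm h Zx).
  + move=> y Zy ry.
    have Zz := Zprod Z1 Zy.
    suff: ((1%g, y) : hT * kT) = 1%g by case.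
    apply: (hyp (1%g, y) Zz) => -[h k]; rewrite /prod_cocycle /= br bl fl (proj1 (Zc _ Zz)).
    rewrite (ry k) //; apply/setIP; split; first exact: in_setT.
    by apply/cent1P; rewrite /commute (central_comm k Zy).
- move=> [hH hK] z Zz rz; have [Zz1 Zz2] := prodZ Zz.
  have [fz2 fz1] := Zc _ Zz.
  have e1 : z.1 = 1%g.
    apply: (hH _ Zz1) => h _; have := rz (h, 1%g).
    by rewrite /prod_cocycle /= cl cr fz2 fr !mulr1.
  have e2 : z.2 = 1%g.
    apply: (hK _ Zz2) => k _; have := rz (1%g, k).
    by rewrite /prod_cocycle /= bl br fz1 fl !mulr1 !mul1r.
  by case: z {Zz rz Zz1 Zz2 fz1 fz2} e1 e2 => /= ? ? -> ->.
Qed.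

Lemma faithful_iff (gT : finGroupType) (p : nat) (a : gT -> gT -> algC) n (rho : gT -> 'M[algC]_n) :
  (p.-group [set: gT])%g -> (forall x y, a x y != 0) ->
  is_alpha_rep [set: gT] a rho -> alpha_irreducible [set: gT] rho ->
  (alpha_faithful [set: gT] rho <->
   forall z, z \in ('Z([set: gT]))%g -> (forall g, a g z = a z g) -> z = 1%g).
Proof.
move=> pG a0 rep irr; split.
  by move=> fa z Zz rz; apply: fa (in_setT z) (reg_scalar rep irr Zz rz).
by move=> hyp; apply: (pgroup_faithful pG a0 rep (proj1 irr) hyp).
Qed.

Lemma reg_conv (gT : finGroupType) (a : gT -> gT -> algC) :
  (forall z, z \in ('Z([set: gT]))%g -> (forall g, a g z = a z g) -> z = 1%g) <->
  (forall x, x \in ('Z([set: gT]))%g -> alpha_regular [set: gT] a x -> x = 1%g).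
Proof.
split=> hyp z Zz rz; apply: (hyp z Zz).
  move=> g; apply: rz; apply/setIP; split; first exact: in_setT.
  by apply/cent1P; rewrite /commute (central_comm g Zz).
by move=> g _; apply: rz.
Qed.

Lemma cocyc_ok (gT : finGroupType) (a : gT -> gT -> algC) : is_cocycle [set: gT] a ->
  [/\ forall x y, a x y != 0, forall x, a x 1%g = 1 &
      forall x y z, a x y * a (x * y)%g z = a y z * a x (y * z)%g].
Proof.
case=> a0 a1 ac; split => [x y|x|x y z]; first exact: a0 (in_setT _) (in_setT _).
  exact: proj2 (a1 x (in_setT x)).
exact: ac.
Qed.

Unset Implicit Arguments.
Local Open Scope group_scope.

Theorem theorem3p7 (p : nat) (hT kT : finGroupType) :
  prime p ->
  p.-group [set: hT] -> ~~ abelian [set: hT] ->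
  p.-group [set: kT] -> ~~ abelian [set: kT] ->
  (* (1) *)
  (forall f : hT -> kT -> algC, is_bihom f ->
     forall n (rho : hT * kT -> 'M[algC]_n),
       is_alpha_rep [set: hT * kT]
         (prod_cocycle (@trivial_cocycle hT) (@trivial_cocycle kT) f) rho ->
       alpha_irreducible [set: hT * kT] rho ->
       ~ alpha_faithful [set: hT * kT] rho)
  /\
  (* (2) *)
  ('Z([set: hT * kT]) \subset [~: [set: hT * kT], [set: hT * kT]] ->
   forall (b : hT -> hT -> algC) (c : kT -> kT -> algC) (f : hT -> kT -> algC),
     is_cocycle [set: hT] b -> is_cocycle [set: kT] c -> is_bihom f ->
     (forall n (rho : hT * kT -> 'M[algC]_n),
        is_alpha_rep [set: hT * kT] (prod_cocycle b c f) rho ->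
        alpha_irreducible [set: hT * kT] rho ->
        (alpha_faithful [set: hT * kT] rho <->
         (forall x, x \in 'Z([set: hT]) -> alpha_regular [set: hT] b x -> x = 1) /\
         (forall y, y \in 'Z([set: kT]) -> alpha_regular [set: kT] c y -> y = 1)))
     /\
     (has_faithful_irr [set: hT * kT] (prod_cocycle b c f) <->
      has_faithful_irr [set: hT] b /\ has_faithful_irr [set: kT] c)).
Proof.
move=> _ pH nH pK nK; have pG := pgroup_prod pH pK; split.
  move=> f fh n rho rep irr fa.
  have nD : [~: [set: hT], [set: hT]] :!=: 1.
    by apply: contra nH => /eqP D1; apply/commG1P.
  have nsD := der_normal 1 [set: hT]%G.
  have := meet_center_nil (pgroup_nil pH) nsD nD.
  case/trivgPn => x /setIP [Dx Zx] nx.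
  have Zz := Zprod Zx (group1 ('Z([set: kT]))%G).
  have [f0 fl fr] := fh; have [f1 _] := bihom1 fh.
  have rz : forall g, prod_cocycle (@trivial_cocycle hT) (@trivial_cocycle kT) f g (x, 1)
     = prod_cocycle (@trivial_cocycle hT) (@trivial_cocycle kT) f (x, 1) g.
    move=> g; rewrite /prod_cocycle /trivial_cocycle /= f1.
    by rewrite (comm_trivial (phi := fun x => f x g.2)).
  have := fa _ (in_setT _) (reg_scalar rep irr Zz rz).
  by case => ex; rewrite ex eqxx in nx.
move=> sZ b c f bc cc fh.
have [a0 a1 ac] := prod_cocycle_ok bc cc fh.
have part2 : forall n (rho : hT * kT -> 'M[algC]_n),
        is_alpha_rep [set: hT * kT] (prod_cocycle b c f) rho ->
        alpha_irreducible [set: hT * kT] rho ->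
        (alpha_faithful [set: hT * kT] rho <->
         (forall x, x \in 'Z([set: hT]) -> alpha_regular [set: hT] b x -> x = 1) /\
         (forall y, y \in 'Z([set: kT]) -> alpha_regular [set: kT] c y -> y = 1)).
  move=> n rho rep irr; rewrite (faithful_iff pG a0 rep irr).
  exact: transl.
split => //; split.
  move=> [n [rho [rep irr fa]]].
  have [cH cK] := (iffLR (part2 n rho rep irr)) fa.
  have [b0 b1 bcc] := cocyc_ok bc; have [c0 c1 ccc] := cocyc_ok cc.
  split.
    have [n1 [r1 [rep1 irr1]]] := exists_irr b0 b1 bcc.
    exists n1, r1; split => //; apply/(faithful_iff pH b0 rep1 irr1).
    exact/reg_conv.
  have [n1 [r1 [rep1 irr1]]] := exists_irr c0 c1 ccc.
  exists n1, r1; split => //; apply/(faithful_iff pK c0 rep1 irr1).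
  exact/reg_conv.
move=> [[n1 [r1 [rep1 irr1 fa1]]] [n2 [r2 [rep2 irr2 fa2]]]].
have [b0 _ _] := cocyc_ok bc; have [c0 _ _] := cocyc_ok cc.
have cH := (iffLR (faithful_iff pH b0 rep1 irr1)) fa1.
have cK := (iffLR (faithful_iff pK c0 rep2 irr2)) fa2.
have [n [rho [rep irr]]] := exists_irr a0 a1 ac.
exists n, rho; split => //; apply/(part2 n rho rep irr).
by split; apply/reg_conv.
Qed.
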